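(* Let $\alpha_1,\dots,\alpha_m,\beta_1,\dots,\beta_n$ be indeterminates, let $a_0=1$, $a_k=\sum_{1\le i_1<\dots<i_k\le m}\alpha_{i_1}\cdots\alpha_{i_k}$ ($1\le k\le m$), $b_0=1$, $b_k=\sum_{1\le j_1<\dots<j_k\le n}\beta_{j_1}\cdots\beta_{j_k}$ ($1\le k\le n$), and let $\mathbf{S}=\operatorname{per}(M)\in\mathbb{Z}[\alpha,\beta]$ where $M$ is the $(m+n)\times(m+n)$ matrix whose row $j$ ($1\le j\le n$) has $a_k$ in column $j+k$ ($0\le k\le m$) and $0$ elsewhere, and whose row $n+i$ ($1\le i\le m$) has $b_k$ in column $i+k$ ($0\le k\le n$) and $0$ elsewhere. Then a monomial $\alpha^\mu\beta^\nu$ has nonzero coefficient in $\mathbf{S}$ if and only if it has a syl-representation. (Indeed $\mathbf{S}=\sum_{\mathcal{S}_1,\mathcal{S}_2\in\{0,1\}^{m\times n},\ PC(\mathcal{S}_1,\mathcal{S}_2)}\alpha^{rs(\mathcal{S}_1)}\beta^{cs(\mathcal{S}_2)}$.)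
   Context: For $M\in\{0,1\}^{m\times n}$: $rs(M)=(\sum_j M_{ij})_{i=1..m}$, $cs(M)=(\sum_i M_{ij})_{j=1..n}$, adjusted row sum $ars(M)=(i+\sum_j M_{ij})_{i=1..m}$, adjusted column sum $acs(M)=(j+\sum_i M_{ij})_{j=1..n}$. For $\mathcal{S}_1,\mathcal{S}_2\in\{0,1\}^{m\times n}$, they are properly coupled, written $PC(\mathcal{S}_1,\mathcal{S}_2)$, iff $\{c'_1,\dots,c'_n,r'_1,\dots,r'_m\}=\{1,\dots,m+n\}$ where $c'=acs(\mathcal{S}_1)$ and $r'=ars(\mathcal{S}_2)$. A syl-representation of the term $\alpha^\mu\beta^\nu$ is a pair $(\mathcal{S}_1,\mathcal{S}_2)$ of matrices in $\{0,1\}^{m\times n}$ with $rs(\mathcal{S}_1)=\mu$, $cs(\mathcal{S}_2)=\nu$ and $PC(\mathcal{S}_1,\mathcal{S}_2)$. *)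

(* Defs.v *)
From HB Require Import structures.
From mathcomp Require Import all_boot all_order all_algebra all_fingroup.
Set Implicit Arguments. Unset Strict Implicit. Unset Printing Implicit Defensive.
Import GRing.Theory.
Local Open Scope ring_scope.

(* Z[x_0, ..., x_{k-1}] as iterated univariate polynomials:
   mpoly k.+1 = (mpoly k)[x_k]. *)
Fixpoint mpoly (k : nat) : comNzRingType :=
  match k with
  | 0 => int
  | k'.+1 => {poly mpoly k'}
  end.

Fixpoint mvar (k : nat) : 'I_k -> mpoly k :=
  match k return 'I_k -> mpoly k with
  | 0 => fun _ => 0
  | k'.+1 => fun i =>
      match unlift ord_max i with
      | Some j => (mvar j)%:P
      | None => 'X
      end
  end.

Fixpoint mcoef (k : nat) : mpoly k -> ('I_k -> nat) -> int :=
  match k return mpoly k -> ('I_k -> nat) -> int with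
  | 0 => fun p _ => p
  | k'.+1 => fun p e =>
      @mcoef k' (p`_(e ord_max)) (fun i => e (widen_ord (leqnSn k') i))
  end.

Definition per (R : comNzRingType) (N : nat) (A : 'M[R]_N) : R :=
  \sum_(s : 'S_N) \prod_(i < N) A i (s i).

Definition alpha (m n : nat) (i : 'I_m) : mpoly (m + n) := mvar (lshift n i).
Definition beta (m n : nat) (j : 'I_n) : mpoly (m + n) := mvar (rshift m j).

Definition a_el (m n k : nat) : mpoly (m + n) :=
  \sum_(A : {set 'I_m} | #|A| == k) \prod_(i in A) alpha n i.
Definition b_el (m n k : nat) : mpoly (m + n) :=
  \sum_(B : {set 'I_n} | #|B| == k) \prod_(j in B) beta m j.

(* The (m+n)x(m+n) Sylvester-type matrix (0-indexed rows/columns):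
   row j < n has a_k in column j+k (0<=k<=m);
   row n+i (i < m) has b_k in column i+k (0<=k<=n). *)
Definition sylM (m n : nat) : 'M[mpoly (m + n)]_(n + m) :=
  \matrix_(r < n + m, c < n + m)
    if (r < n)%N then
      (if (r <= c <= r + m)%N then a_el m n (c - r) else 0)
    else
      (if (r - n <= c <= r - n + n)%N then b_el m n (c - (r - n)) else 0).

Definition sylS (m n : nat) : mpoly (m + n) :=
  per (castmx (addnC n m, addnC n m) (sylM m n)).

Definition expvec (m n : nat) (mu : 'I_m -> nat) (nu : 'I_n -> nat)
  : 'I_(m + n) -> nat :=
  fun k => match split k with inl i => mu i | inr j => nu j end.

(* Row/column sums and adjusted sums (1-based indices) of 0/1 matrices. *)
Definition rs (m n : nat) (M : 'M[bool]_(m, n)) (i : 'I_m) : nat :=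
  (\sum_(j < n) M i j)%N.
Definition cs (m n : nat) (M : 'M[bool]_(m, n)) (j : 'I_n) : nat :=
  (\sum_(i < m) M i j)%N.
Definition ars (m n : nat) (M : 'M[bool]_(m, n)) (i : 'I_m) : nat :=
  (i.+1 + rs M i)%N.
Definition acs (m n : nat) (M : 'M[bool]_(m, n)) (j : 'I_n) : nat :=
  (j.+1 + cs M j)%N.

Definition PC (m n : nat) (S1 S2 : 'M[bool]_(m, n)) : Prop :=
  [seq acs S1 j | j : 'I_n] ++ [seq ars S2 i | i : 'I_m] =i iota 1 (m + n).

Definition syl_rep (m n : nat) (mu : 'I_m -> nat) (nu : 'I_n -> nat)
  (S1 S2 : 'M[bool]_(m, n)) : Prop :=
  (forall i, rs S1 i = mu i) /\ (forall j, cs S2 j = nu j) /\ PC S1 S2.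

(* Main.v *)
Require Import Defs.
From mathcomp Require Import all_boot all_order all_algebra all_fingroup.
From mathcomp Require Import zify.
Set Implicit Arguments. Unset Strict Implicit. Unset Printing Implicit Defensive.
Import Order.TTheory GRing.Theory Num.Theory.

Lemma mcoef0 k e : @mcoef k 0%R e = 0%R.
Proof. elim: k e => [|k IH] e //=. by rewrite coef0 IH. Qed.

Lemma mcoefD k (p q : mpoly k) e : mcoef (p + q)%R e = (mcoef p e + mcoef q e)%R.
Proof. elim: k p q e => [|k IH] p q e //=. by rewrite coefD IH. Qed.

Lemma mcoef_sum k (I : finType) (F : I -> mpoly k) e :
  mcoef (\sum_i F i)%R e = (\sum_i mcoef (F i) e)%R.
Proof. apply: (big_morph (fun p : mpoly k => mcoef p e)). by move=> p q; apply: mcoefD. exact: mcoef0. Qed.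

Definition mon k (f : 'I_k -> nat) : mpoly k := (\prod_(i < k) mvar i ^+ f i)%R.

Lemma mvar_widen k (i : 'I_k) : @mvar k.+1 (widen_ord (leqnSn k) i) = (mvar i)%:P%R.
Proof.
rewrite /=; case: unliftP => [j /(congr1 val)/= Ej|/(congr1 val)/= E].
  have -> : j = i by apply: val_inj; rewrite /= Ej /bump; have := ltn_ord j; case: leqP => //= ; lia.
  by [].
by have := ltn_ord i; rewrite E; lia.
Qed.

Lemma mvar_max k : @mvar k.+1 ord_max = 'X%R.
Proof. by rewrite /= unlift_none. Qed.

Lemma mon_S k f : @mon k.+1 f =
  (((mon (fun i => f (widen_ord (leqnSn k) i)))%:P * 'X^(f ord_max)) : {poly mpoly k})%R.
Proof.
rewrite /mon big_ord_recr; congr (_ * _)%R.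
  rewrite rmorph_prod; apply: eq_bigr => i _; by rewrite mvar_widen rmorphXn.
by rewrite mvar_max.
Qed.

Lemma mcoef_mon k (f e : 'I_k -> nat) :
  mcoef (mon f) e = (\prod_(i < k) (f i == e i)%:R)%R.
Proof.
elim: k f e => [|k IH] f e; first by rewrite /mon !big_ord0.
rewrite mon_S [RHS]big_ord_recr /= coefMXn coefC.
case: ltnP => H.
  rewrite mcoef0 (_ : (f ord_max == e ord_max) = false) ?mulr0 //; apply/eqP; lia.
case: eqP => [E|NE].
  rewrite IH. have -> : e ord_max = f ord_max by lia.
  by rewrite eqxx mulr1.
rewrite mcoef0 (_ : (f ord_max == e ord_max) = false) ?mulr0 //.
by apply/eqP; lia.
Qed.

Lemma mon_ext k (f g : 'I_k -> nat) : f =1 g -> mon f = mon g.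
Proof. by move=> H; apply: eq_bigr => i _; rewrite H. Qed.

Lemma monD k (f g : 'I_k -> nat) : mon (fun i => f i + g i)%N = (mon f * mon g)%R.
Proof. by rewrite /mon -big_split; apply: eq_bigr => i _; rewrite exprD. Qed.

Lemma mon0 k : mon (fun _ : 'I_k => 0%N) = 1%R.
Proof. by rewrite /mon; apply: big1 => i _; rewrite expr0. Qed.

Lemma mon_prod k n (f : 'I_n -> 'I_k -> nat) :
  (\prod_(j < n) mon (f j))%R = mon (fun i => \sum_(j < n) f j i)%N.
Proof.
elim: n f => [|n IH] f.
  by rewrite big_ord0 -(mon0 k); apply: mon_ext => i; rewrite big_ord0.
rewrite big_ord_recr /= IH -monD; apply: mon_ext => i; by rewrite big_ord_recr.
Qed.

Lemma split_l m n (i : 'I_m) : split (lshift n i) = inl i.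
Proof. exact: (unsplitK (inl i)). Qed.
Lemma split_r m n (j : 'I_n) : split (rshift m j) = inr j.
Proof. exact: (unsplitK (inr j)). Qed.

Lemma mon_expvec m n (mu : 'I_m -> nat) (nu : 'I_n -> nat) :
  mon (expvec mu nu) =
  (\prod_(i < m) alpha n i ^+ mu i * \prod_(j < n) beta m j ^+ nu j)%R.
Proof. by rewrite /mon big_split_ord /expvec; congr (_ * _)%R; apply: eq_bigr => i _;
  rewrite ?split_l ?split_r. Qed.

Lemma mon_alpha m n (X : {set 'I_m}) :
  (\prod_(i in X) alpha n i)%R = mon (expvec (fun i => (i \in X) : nat) (fun _ => 0%N)).
Proof.
rewrite mon_expvec (eq_bigr (fun _ => 1%R) (fun _ _ => expr0 _)) big1_eq mulr1.
rewrite big_mkcond; apply: eq_bigr => i _; by case: (i \in X); rewrite ?expr1 ?expr0.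
Qed.

Lemma mon_beta m n (Y : {set 'I_n}) :
  (\prod_(j in Y) beta m j)%R = mon (expvec (fun _ => 0%N) (fun j => (j \in Y) : nat)).
Proof.
rewrite mon_expvec (eq_bigr (fun _ => 1%R) (fun _ _ => expr0 _)) big1_eq mul1r.
rewrite big_mkcond; apply: eq_bigr => i _; by case: (i \in Y); rewrite ?expr1 ?expr0.
Qed.

Lemma per_castmx (R : comNzRingType) N N' (e : N = N') (A : 'M[R]_N) :
  per (castmx (e, e) A) = per A.
Proof. by case: N' / e; rewrite castmx_id. Qed.

Lemma sum_bool_card (I : finType) (P : pred I) : (\sum_i (P i : nat))%N = #|[set i | P i]|.
Proof.
rewrite cardsE -sum1_card [RHS]big_mkcond /=; apply: eq_bigr => i _; rewrite unfold_in; by case: (P i).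
Qed.

Lemma sylM_l m n (j : 'I_n) (c : 'I_(n + m)) :
  sylM m n (lshift m j) c =
  (\sum_(X : {set 'I_m}) (if (j + #|X| == c)%N then \prod_(i in X) alpha n i else 0))%R.
Proof.
rewrite /sylM mxE /= ltn_ord.
case: ifP => H; [move/andP: H => [H1 H2]|].
  rewrite /a_el big_mkcond /=; apply: eq_bigr => X _.
  have -> : (#|X| == c - j)%N = (j + #|X| == c)%N by apply/eqP/eqP; lia.
  by [].
rewrite big1 // => X _; have := max_card X; rewrite card_ord => HX.
by case: eqP => // E; move: H; rewrite -E leq_addr /= leq_add2l HX.
Qed.

Lemma sylM_r m n (i : 'I_m) (c : 'I_(n + m)) :
  sylM m n (rshift n i) c =
  (\sum_(Y : {set 'I_n}) (if (i + #|Y| == c)%N then \prod_(j in Y) beta m j else 0))%R.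
Proof.
rewrite /sylM mxE /= ltnNge leq_addr /= addKn.
case: ifP => H; [move/andP: H => [H1 H2]|].
  rewrite /b_el big_mkcond /=; apply: eq_bigr => X _.
  have -> : (#|X| == c - i)%N = (i + #|X| == c)%N by apply/eqP/eqP; lia.
  by [].
rewrite big1 // => X _; have := max_card X; rewrite card_ord => HX.
by case: eqP => // E; move: H; rewrite -E leq_addr /= leq_add2l HX.
Qed.

Lemma prod_if (R : comNzRingType) (I : finType) (c : pred I) (F : I -> R) :
  (\prod_i (if c i then F i else 0))%R = if [forall i, c i] then (\prod_i F i)%R else 0%R.
Proof.
case: ifP => [/forallP H|/negbT]; first by apply: eq_bigr => i _; rewrite H.
rewrite negb_forall => /existsP [i /negbTE Hi].
by rewrite (bigD1 i) //= Hi mul0r.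
Qed.

Definition cond m n (s : 'S_(n + m)) (gA : {ffun 'I_n -> {set 'I_m}})
  (gB : {ffun 'I_m -> {set 'I_n}}) : bool :=
  [forall j : 'I_n, j + #|gA j| == s (lshift m j)] && [forall i : 'I_m, i + #|gB i| == s (rshift n i)].

Definition Fexp m n (gA : {ffun 'I_n -> {set 'I_m}}) (gB : {ffun 'I_m -> {set 'I_n}}) :=
  expvec (fun i => \sum_j ((i \in gA j) : nat)) (fun j => \sum_i ((j \in gB i) : nat)).

Lemma expand m n : sylS m n =
  (\sum_(s : 'S_(n + m)) \sum_(gA : {ffun 'I_n -> {set 'I_m}}) \sum_(gB : {ffun 'I_m -> {set 'I_n}})
     (if cond s gA gB then mon (Fexp gA gB) else 0))%R.
Proof.
rewrite /sylS per_castmx /per; apply: eq_bigr => s _.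
rewrite big_split_ord /=.
under eq_bigr => j _ do rewrite sylM_l.
under [X in (_ * X)%R]eq_bigr => i _ do rewrite sylM_r.
rewrite !bigA_distr_bigA big_distrlr /=; apply: eq_bigr => gA _; apply: eq_bigr => gB _.
rewrite !prod_if /cond.
case: [forall _, _]; case: [forall _, _]; rewrite /= ?mulr0 ?mul0r //.
under eq_bigr => j _ do rewrite mon_alpha.
under [X in (_ * X)%R]eq_bigr => i _ do rewrite mon_beta.
rewrite !mon_prod -monD; apply: mon_ext => k.
rewrite /Fexp /expvec; case: (split k) => [i|j].
  by rewrite [X in (_ + X)%N]big1 ?addn0.
by rewrite big1.
Qed.

Lemma term_ge0 k (c : bool) (f e : 'I_k -> nat) :
  (0 <= mcoef (if c then mon f else 0%R) e)%R.
Proof. case: c; last by rewrite mcoef0. by rewrite mcoef_mon; apply: prodr_ge0 => i _; apply: ler0n. Qed.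

Lemma term_gt0 k (c : bool) (f e : 'I_k -> nat) :
  (0 < mcoef (if c then mon f else 0%R) e)%R <-> c /\ (forall i, f i = e i).
Proof.
case: c; last by rewrite mcoef0 ltxx; split => // -[].
rewrite mcoef_mon lt0r (prodr_ge0 _ (fun i _ => ler0n _ _)) andbT.
split.
  move/prodf_neq0 => H; split => // i; have := H i isT; case: (f i =P e i) => // _; by rewrite eqxx.
move=> [_ H]; apply/prodf_neq0 => i _; by rewrite H eqxx oner_neq0.
Qed.

Lemma sum_gt0 (I : finType) (F : I -> int) : (forall i, 0 <= F i)%R ->
  (0 < \sum_i F i)%R <-> exists i, (0 < F i)%R.
Proof.
move=> H; rewrite lt0r sumr_ge0 ?andbT // psumr_neq0 //; split.
  by move/hasP => [i _ /= Hi]; exists i.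
by move=> [i Hi]; apply/hasP; exists i => //; rewrite mem_index_enum.
Qed.

Lemma coef_ne0 m n (e : 'I_(m + n) -> nat) :
  mcoef (sylS m n) e != 0%R <->
  exists s gA gB, cond s gA gB /\ (forall k, Fexp gA gB k = e k).
Proof.
have G3 s gA : forall gB, (0 <= mcoef (if cond s gA gB then mon (Fexp gA gB) else 0%R) e)%R.
  by move=> gB; apply: term_ge0.
have G2 s : forall gA, (0 <= mcoef (\sum_gB (if cond s gA gB then mon (Fexp gA gB) else 0%R)) e)%R.
  by move=> gA; rewrite mcoef_sum sumr_ge0.
have G1 : forall s, (0 <= mcoef (\sum_gA \sum_gB (if cond s gA gB then mon (Fexp gA gB) else 0%R)) e)%R.
  by move=> s; rewrite mcoef_sum sumr_ge0.
have H0 : (0 <= mcoef (sylS m n) e)%R by rewrite expand mcoef_sum sumr_ge0.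
have -> : (mcoef (sylS m n) e != 0%R) = (0 < mcoef (sylS m n) e)%R by rewrite lt0r H0 andbT.
rewrite expand mcoef_sum sum_gt0 //; split.
  move=> [s]; rewrite mcoef_sum sum_gt0 // => -[gA]; rewrite mcoef_sum sum_gt0 // => -[gB].
  move/term_gt0 => [Hc HF]; by exists s, gA, gB.
move=> [s [gA [gB [Hc HF]]]]; exists s; rewrite mcoef_sum sum_gt0 //; exists gA.
rewrite mcoef_sum sum_gt0 //; exists gB; exact/term_gt0.
Qed.

Lemma card_set_mem (T : finType) (A : {set T}) : #|[set i | i \in A]| = #|A|.
Proof. by rewrite (_ : [set i | i \in A] = A) //; apply/setP => i; rewrite inE. Qed.

Definition mS1 m n (gA : {ffun 'I_n -> {set 'I_m}}) : 'M[bool]_(m, n) :=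
  (\matrix_(i < m, j < n) (i \in gA j))%R.
Definition mS2 m n (gB : {ffun 'I_m -> {set 'I_n}}) : 'M[bool]_(m, n) :=
  (\matrix_(i < m, j < n) (j \in gB i))%R.

Lemma fwd m n (mu : 'I_m -> nat) (nu : 'I_n -> nat) s gA gB :
  cond s gA gB -> (forall k, Fexp gA gB k = expvec mu nu k) ->
  exists S1 S2 : 'M[bool]_(m, n), syl_rep mu nu S1 S2.
Proof.
move=> /andP [/forallP HA /forallP HB] HF.
exists (mS1 gA), (mS2 gB).
have Ers i : rs (mS1 gA) i = \sum_j ((i \in gA j) : nat).
  by apply: eq_bigr => j _; rewrite mxE.
have Ecs j : cs (mS2 gB) j = \sum_i ((j \in gB i) : nat).
  by apply: eq_bigr => i _; rewrite mxE.
split; [|split].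
- move=> i; rewrite Ers; have := HF (lshift n i); by rewrite /Fexp /expvec split_l.
- move=> j; rewrite Ecs; have := HF (rshift m j); by rewrite /Fexp /expvec split_r.
have E1 : [seq acs (mS1 gA) j | j : 'I_n] =
          [seq (s (lshift m j)).+1 | j : 'I_n].
  apply: eq_image => // j; rewrite /acs /cs.
  under eq_bigr => i _ do rewrite mxE.
  rewrite sum_bool_card card_set_mem; have := HA j; move/eqP => <-; by rewrite addSn.
have E2 : [seq ars (mS2 gB) i | i : 'I_m] =
          [seq (s (rshift n i)).+1 | i : 'I_m].
  apply: eq_image => // i; rewrite /ars /rs.
  under eq_bigr => j _ do rewrite mxE.
  rewrite sum_bool_card card_set_mem; have := HB i; move/eqP => <-; by rewrite addSn.
move=> x; rewrite /PC E1 E2 mem_cat mem_iota; apply/idP/idP.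
  case/orP => /imageP [j _ ->].
    by have := ltn_ord (s (lshift m j)); lia.
  by have := ltn_ord (s (rshift n j)); lia.
move/andP => [H1 H2].
have Hx : x.-1 < n + m by lia.
pose r0 : 'I_(n + m) := Ordinal Hx.
have Hs : s ((s^-1)%g r0) = r0 := permKV s r0.
move: Hs; rewrite -(splitK ((s^-1)%g r0)); case: (split _) => [j|i] /= Hs.
  apply/orP; left; apply/imageP; exists j => //; rewrite Hs /=; lia.
apply/orP; right; apply/imageP; exists i => //; rewrite Hs /=; lia.
Qed.

Lemma bwd m n (mu : 'I_m -> nat) (nu : 'I_n -> nat) (S1 S2 : 'M[bool]_(m, n)) :
  syl_rep mu nu S1 S2 ->
  exists s gA gB, @cond m n s gA gB /\ (forall k, Fexp gA gB k = expvec mu nu k).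
Proof.
move=> [Hr [Hc HPC]].
pose G (u : 'I_n + 'I_m) := match u with inl j => acs S1 j | inr i => ars S2 i end.
set L1 := [seq acs S1 j | j : 'I_n]; set L2 := [seq ars S2 i | i : 'I_m].
have HG u : G u \in L1 ++ L2.
  by case: u => [j|i]; rewrite mem_cat; apply/orP; [left|right]; apply: image_f.
have Hb u : 1 <= G u <= m + n.
  by have := HPC (G u); rewrite HG mem_iota => /esym /andP [-> ?]; lia.
have U : uniq (L1 ++ L2).
  rewrite (uniq_size_uniq (iota_uniq 1 (m + n)) (fun x => esym (HPC x))).
  by rewrite size_cat !size_image !card_ord size_iota addnC.
move: U; rewrite cat_uniq => /and3P [U1 /hasPn U12 U2].
have I1 : injective (acs S1) by apply/injectiveP.
have I2 : injective (ars S2) by apply/injectiveP.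
have Ginj : injective G.
  move=> [j1|i1] [j2|i2] /= E.
  - by rewrite (I1 _ _ E).
  - have H2 : ars S2 i2 \in L2 by apply: image_f.
    have H1 : acs S1 j1 \in L1 by apply: image_f.
    by have := U12 _ H2; rewrite -E H1.
  - have H2 : ars S2 i1 \in L2 by apply: image_f.
    have H1 : acs S1 j2 \in L1 by apply: image_f.
    by have := U12 _ H2; rewrite E H1.
  - by rewrite (I2 _ _ E).
have hlt u : (G u).-1 < n + m by have := Hb u; lia.
pose h (r : 'I_(n + m)) : 'I_(n + m) := Ordinal (hlt (split r)).
have hinj : injective h.
  move=> r1 r2 /(congr1 val) /= E.
  apply: (can_inj splitK); apply: Ginj.
  by have := Hb (split r1); have := Hb (split r2); lia.
exists (perm hinj), [ffun j => [set i | S1 i j]], [ffun i => [set j | S2 i j]].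
split.
  apply/andP; split; apply/forallP.
    move=> j; rewrite permE /= split_l /= ffunE.
    by rewrite /acs /cs sum_bool_card.
  move=> i; rewrite permE /= split_r /= ffunE.
  by rewrite /ars /rs sum_bool_card.
move=> k; rewrite /Fexp /expvec; case: (split k) => [i|j].
  rewrite -Hr; apply: eq_bigr => j _; by rewrite ffunE inE.
rewrite -Hc; apply: eq_bigr => i _; by rewrite ffunE inE.
Qed.

Theorem mainTheorem3 (m n : nat) (mu : 'I_m -> nat) (nu : 'I_n -> nat) :
  mcoef (sylS m n) (expvec mu nu) != 0%R <->
  exists S1 S2 : 'M[bool]_(m, n), syl_rep mu nu S1 S2.
Proof.
rewrite coef_ne0; split.
  by move=> [s [gA [gB [Hc HF]]]]; apply: fwd Hc HF.
by move=> [S1 [S2 H]]; apply: bwd H.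
Qed.
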